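(* The number $|\Pi_{\mathfrak t}^+|$ of isotropy summands of the following flag manifolds of classical Lie groups is: (A) $SU(n)/S(U(n_1)\times\cdots\times U(n_s))$, $n=\sum n_i$: $s(s-1)/2$. (B i) $SO(2n+1)/U(n_1)\times\cdots\times U(n_s)\times U(1)^m$, $n\ge 2$: $(s+m)^2+s$. (B ii) $SO(2n+1)/U(n_1)\times\cdots\times U(n_s)\times U(1)^m\times SO(2t+1)$, $t\ge2$: $(s+m)^2+s$. (C i) $Sp(n)/U(n_1)\times\cdots\times U(n_s)\times U(1)^m$, $n\ge3$: $(s+m)^2$. (C ii) $Sp(n)/U(n_1)\times\cdots\times U(n_s)\times U(1)^m\times Sp(t)$, $t\ge3$: $(s+m)^2+(s+m)$. (D i) $SO(2n)/U(n_1)\times\cdots\times U(n_s)\times U(1)^m$, $n\ge4$: $(s+m)^2-m$. (D ii) $SO(2n)/U(n_1)\times\cdots\times U(n_s)\times U(1)^m\times SO(2t)$, $t\ge4$: $(s+m)^2+s$. Here in cases (B i), (C i), (D i) one has $\sum n_i+m=n$, $n_i>1$, $m,s\ge0$; in cases (B ii), (C ii), (D ii) one has $\sum n_i+t+m=n$, $n_i>1$, $m,s\ge0$.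
   Context: For a flag manifold $M=U/K$ of a compact semisimple Lie group, with complexified Lie algebra $\mathfrak g$, Cartan subalgebra $\mathfrak h$, root system $\Pi$, and isotropy algebra with complexification $\mathfrak k^{\mathbb C}=\mathfrak h\oplus\bigoplus_{\alpha\in\Pi_\Theta}\mathfrak g_\alpha$ (for a subset $\Pi_\Theta$ of roots generated by a set of simple roots), let $\Pi_M=\Pi\setminus\Pi_\Theta$, $\mathfrak t=\{H\in i\mathfrak h_{\mathbb R}:\alpha(H)=0\ \forall\alpha\in\Pi_\Theta\}$ (where $\mathfrak h_{\mathbb R}$ is the real span of the coroots), and $k$ the restriction of functionals to $\mathfrak t$. The t-roots are $\Pi_{\mathfrak t}=k(\Pi_M)$ and the positive t-roots $\Pi^+_{\mathfrak t}=k(\Pi_M\cap\Pi^+)$. Positive t-roots $\xi$ are in bijection with the irreducible summands $\mathfrak m_\xi=\sum_{k(\alpha)=\xi}\mathfrak u_\alpha$ (with $\mathfrak u_\alpha$ the real span of $X_\alpha-X_{-\alpha},\,i(X_\alpha+X_{-\alpha})$) of the isotropy representation on the tangent space $\mathfrak m=\bigoplus_\xi\mathfrak m_\xi$; the number of isotropy summands is $|\Pi^+_{\mathfrak t}|$. The subgroups are the standard block embeddings (the $U(n_i)$ and $U(1)$ factors corresponding to consecutive blocks of the coordinates $\varepsilon_1,\dots,\varepsilon_n$ of the standard Cartan subalgebra, the last factor $SO(2t+1)$, $Sp(t)$ or $SO(2t)$ to the last $t$ coordinates). *)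

(* Defs.v *)
From HB Require Import structures.
From mathcomp Require Import all_boot all_order all_algebra.
From mathcomp Require Import reals.
Set Implicit Arguments. Unset Strict Implicit. Unset Printing Implicit Defensive.
Import Order.TTheory GRing.Theory Num.Theory.
Local Open Scope ring_scope.

(** Coordinates: a root / weight is an integer row vector a, viewed as the
    functional  sum_i a_i eps_i  on the real Cartan subalgebra 'rV[R]_n
    (coordinates w.r.t. the standard basis dual to eps_1..eps_n; the factor i
    of i h_R is irrelevant for the counting). *)

Definition ev (n : nat) (i : 'I_n) : 'rV[int]_n := delta_mx 0 i.

Definition pairing (R : numDomainType) (n : nat) (a : 'rV[int]_n) (H : 'rV[R]_n) : R :=
  \sum_i (a 0 i)%:~R * H 0 i.

Definition posrootsA (n : nat) (a : 'rV[int]_n) : Prop :=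
  exists i j : 'I_n, (i < j)%N /\ a = ev i - ev j.

Definition long_root (n : nat) (a : 'rV[int]_n) : Prop :=
  exists i j : 'I_n, i != j /\
    (a = ev i - ev j \/ a = ev i + ev j \/ a = - ev i - ev j).
Definition long_pos (n : nat) (a : 'rV[int]_n) : Prop :=
  exists i j : 'I_n, (i < j)%N /\ (a = ev i - ev j \/ a = ev i + ev j).

Definition rootsB (n : nat) (a : 'rV[int]_n) : Prop :=
  long_root a \/ exists i : 'I_n, a = ev i \/ a = - ev i.
Definition posrootsB (n : nat) (a : 'rV[int]_n) : Prop :=
  long_pos a \/ exists i : 'I_n, a = ev i.
Definition rootsC (n : nat) (a : 'rV[int]_n) : Prop :=
  long_root a \/ exists i : 'I_n, a = ev i *+ 2 \/ a = - (ev i *+ 2).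
Definition posrootsC (n : nat) (a : 'rV[int]_n) : Prop :=
  long_pos a \/ exists i : 'I_n, a = ev i *+ 2.
Definition rootsD (n : nat) (a : 'rV[int]_n) : Prop := long_root a.
Definition posrootsD (n : nat) (a : 'rV[int]_n) : Prop := long_pos a.

(** Consecutive blocks of coordinates with sizes bs (0-based coordinates):
    blk bs i = index of the block containing coordinate i. *)
Definition blk (bs : seq nat) (i : nat) : nat :=
  count (fun k => (sumn (take k.+1 bs) <= i)%N) (iota 0 (size bs)).

Definition same_U (bs : seq nat) (i j : nat) : bool :=
  [&& (i < sumn bs)%N, (j < sumn bs)%N & blk bs i == blk bs j].

(** Roots of the isotropy subgroup (Pi_Theta):
    - type A: eps_i - eps_j, i <> j in the same U(n_k)-block;
    - types B,C,D: the same, plus the roots of the last factor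
      SO(2t+1)/Sp(t)/SO(2t), i.e. roots supported in the last tt coordinates. *)
Definition thetaA (n : nat) (bs : seq nat) (a : 'rV[int]_n) : Prop :=
  exists i j : 'I_n, i != j /\ same_U bs i j /\ a = ev i - ev j.

Definition thetaBCD (n : nat) (isroot : 'rV[int]_n -> Prop) (bs : seq nat)
  (tt : nat) (a : 'rV[int]_n) : Prop :=
  (exists i j : 'I_n, i != j /\ same_U bs i j /\ a = ev i - ev j) \/
  (isroot a /\ forall k : 'I_n, a 0 k != 0 -> (n - tt <= k)%N).

(** Real span of coroots: sum-zero hyperplane for SU(n), everything otherwise. *)
Definition hR_A (R : numDomainType) (n : nat) (H : 'rV[R]_n) : Prop :=
  \sum_i H 0 i = 0.
Definition hR_full (R : numDomainType) (n : nat) (H : 'rV[R]_n) : Prop := True.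

Definition tsp (R : numDomainType) (n : nat) (hR : 'rV[R]_n -> Prop)
  (theta : 'rV[int]_n -> Prop) (H : 'rV[R]_n) : Prop :=
  hR H /\ forall a, theta a -> pairing a H = 0.

Definition restr (R : numDomainType) (n : nat) (hR : 'rV[R]_n -> Prop)
  (theta : 'rV[int]_n -> Prop) (a : 'rV[int]_n) :
  {H : 'rV[R]_n | tsp hR theta H} -> R :=
  fun H => pairing a (sval H).
Arguments restr : clear implicits.

Definition has_card (T : Type) (A : T -> Prop) (N : nat) : Prop :=
  exists f : 'I_N -> T, injective f /\ forall x, A x <-> exists i, f i = x.

Definition num_summands (R : numDomainType) (n : nat) (hR : 'rV[R]_n -> Prop)
  (pos theta : 'rV[int]_n -> Prop) (N : nat) : Prop :=
  has_card (fun f : {H : 'rV[R]_n | tsp hR theta H} -> R =>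
              exists a, pos a /\ ~ theta a /\ f = restr R n hR theta a) N.

Arguments num_summands : clear implicits.
Arguments thetaA : clear implicits.
Arguments thetaBCD : clear implicits.

(* Main.v *)
Require Import Defs.
From HB Require Import structures.
From mathcomp Require Import all_boot all_order all_algebra.
From mathcomp Require Import reals.
From mathcomp Require Import zify ring lra.
From Stdlib Require Import FunctionalExtensionality.
Set Implicit Arguments. Unset Strict Implicit. Unset Printing Implicit Defensive.
Import Order.TTheory GRing.Theory Num.Theory.

Section Blocks.
Variable bs : seq nat.
Definition Pb k := sumn (take k bs).

Lemma Pb_mono k k' : (k <= k')%N -> (Pb k <= Pb k')%N.
Proof.
rewrite /Pb; elim: bs k k' => [|x s IH] [|k] [|k'] //=.
by rewrite ltnS => /IH; lia.
Qed.

Lemma Pb_S c : (c < size bs)%N -> Pb c.+1 = (Pb c + nth 0 bs c)%N.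
Proof. by move=> h; rewrite /Pb (take_nth 0 h) sumn_rcons. Qed.

Lemma Pb_size : Pb (size bs) = sumn bs.
Proof. by rewrite /Pb take_size. Qed.

Lemma blk_eq c i : (c < size bs)%N -> (Pb c <= i < Pb c.+1)%N -> blk bs i = c.
Proof.
move=> hc /andP[h1 h2]; rewrite /blk.
have -> : size bs = (c + (size bs - c))%N by lia.
rewrite iotaD count_cat add0n.
rewrite (eq_in_count (a2 := predT)); last first.
  move=> k; rewrite mem_iota => /andP[_ hk] /=.
  by apply: leq_trans h1; apply: Pb_mono.
rewrite count_predT size_iota.
rewrite (eq_in_count (a2 := pred0)); last first.
  move=> k; rewrite mem_iota => /andP[hk _] /=.
  apply/negbTE; rewrite -ltnNge; apply: leq_trans h2 _; exact: Pb_mono.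
by rewrite count_pred0 addn0.
Qed.

Lemma blk_mono i j : (i <= j)%N -> (blk bs i <= blk bs j)%N.
Proof. move=> h; apply: sub_count => k /= hk; exact: leq_trans hk h. Qed.

Lemma blk_ex i : (i < sumn bs)%N -> exists c, (c < size bs)%N /\ (Pb c <= i < Pb c.+1)%N.
Proof.
rewrite /Pb; elim: bs i => [|x s IH] i //=.
case: (ltnP i x) => hix.
  by exists 0%N; split => //=; lia.
move=> hi; have [c [hc hc2]] : exists c, (c < size s)%N /\ (sumn (take c s) <= i - x < sumn (take c.+1 s))%N.
  apply: IH; lia.
exists c.+1; split => //=; lia.
Qed.

Lemma blk_inv i : (i < sumn bs)%N ->
  (blk bs i < size bs)%N /\ (Pb (blk bs i) <= i < Pb (blk bs i).+1)%N.
Proof. by move=> /blk_ex [c [hc hc2]]; rewrite (blk_eq hc hc2). Qed.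

Lemma blk_start c : (c < size bs)%N -> (0 < nth 0 bs c)%N ->
  blk bs (Pb c) = c /\ (Pb c < sumn bs)%N.
Proof.
move=> hc hp; have h1 : (Pb c < Pb c.+1)%N by rewrite Pb_S //; lia.
split; first by apply: blk_eq => //; rewrite leqnn h1.
by apply: leq_trans h1 _; rewrite -Pb_size; apply: Pb_mono.
Qed.

Lemma blk_second c : (c < size bs)%N -> (1 < nth 0 bs c)%N ->
  blk bs (Pb c).+1 = c /\ ((Pb c).+1 < sumn bs)%N.
Proof.
move=> hc hp; have h1 : ((Pb c).+1 < Pb c.+1)%N by rewrite Pb_S //; lia.
split; first by apply: blk_eq => //; rewrite h1; lia.
by apply: leq_trans h1 _; rewrite -Pb_size; apply: Pb_mono.
Qed.

Lemma blk_two i j : (i < j)%N -> (j < sumn bs)%N -> blk bs i = blk bs j ->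
  (1 < nth 0 bs (blk bs i))%N.
Proof.
move=> hij hj he; have [hc hr] := blk_inv hj.
have hi : (i < sumn bs)%N by lia.
have [_ hr'] := blk_inv hi.
move: hr hr'; rewrite -he Pb_S //; lia.
Qed.
End Blocks.

Local Open Scope ring_scope.

Section Wv.
Variables (n : nat) (bs : seq nat).
Local Notation S := (size bs).
Local Notation sb := (sumn bs).

Definition wv (a : 'rV[int]_n) : 'rV[int]_S :=
  \row_(c < S) \sum_(i < n | (i < sb)%N && (blk bs i == c)) a 0 i.

Lemma wvD a b : wv (a + b) = wv a + wv b.
Proof. by apply/matrixP => i j; rewrite !mxE -big_split /=; apply: eq_bigr => k _; rewrite mxE. Qed.

Lemma wvN a : wv (- a) = - wv a.
Proof. by apply/matrixP => i j; rewrite !mxE -sumrN; apply: eq_bigr => k _; rewrite mxE. Qed.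

Lemma wvB a b : wv (a - b) = wv a - wv b.
Proof. by rewrite wvD wvN. Qed.

Lemma wvM2 a : wv (a *+ 2) = wv a *+ 2.
Proof. by rewrite !mulr2n wvD. Qed.

Lemma evE m (i : 'I_m) k : ev i 0 k = (i == k)%:R.
Proof. by rewrite /ev mxE eqxx eq_sym. Qed.

Lemma wv_ev_out (i : 'I_n) : (sb <= i)%N -> wv (ev i) = 0.
Proof.
move=> h; apply/matrixP => x c; rewrite !mxE big1 // => k /andP[hk _].
rewrite evE; case: eqP => // e; subst k; lia.
Qed.

Lemma wv_ev_in (i : 'I_n) : (i < sb)%N ->
  exists c : 'I_S, val c = blk bs i /\ wv (ev i) = ev c.
Proof.
move=> h; have [hc _] := blk_inv h.
exists (Ordinal hc); split => //.
apply/matrixP => x c; rewrite !mxE [x]ord1 eqxx /=.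
case: (eqVneq (blk bs i) c) => [e|ne].
  have -> : (c == Ordinal hc) = true by apply/eqP/val_inj; rewrite /= e.
  rewrite (bigD1 i) /=; last by rewrite h e eqxx.
  rewrite evE eqxx big1 ?addr0 // => k /andP[_ /negbTE]; by rewrite evE eq_sym => ->.
have -> : (c == Ordinal hc) = false by apply/negbTE; apply: contra ne => /eqP ->.
rewrite big1 // => k /andP[_ hk]; rewrite evE.
by case: eqP => // e; subst k; rewrite hk in ne.
Qed.

Lemma wv_tail (a : 'rV[int]_n) : (forall k : 'I_n, a 0 k != 0 -> (sb <= k)%N) -> wv a = 0.
Proof.
move=> h; apply/matrixP => x c; rewrite !mxE big1 // => k /andP[hk _].
apply/eqP; apply: contraT => /h; lia.
Qed.
End Wv.

Section Pair.
Variables (R : realType) (n : nat).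
Implicit Types (a b : 'rV[int]_n) (H : 'rV[R]_n).
Lemma pairingD a b H : pairing (a + b) H = pairing a H + pairing b H.
Proof. by rewrite /pairing -big_split; apply: eq_bigr => i _; rewrite mxE intrD mulrDl. Qed.
Lemma pairingN a H : pairing (- a) H = - pairing a H.
Proof. by rewrite /pairing -sumrN; apply: eq_bigr => i _; rewrite mxE intrN mulNr. Qed.
Lemma pairingB a b H : pairing (a - b) H = pairing a H - pairing b H.
Proof. by rewrite pairingD pairingN. Qed.
Lemma pairingM2 a H : pairing (a *+ 2) H = pairing a H *+ 2.
Proof. by rewrite !mulr2n pairingD. Qed.
Lemma pairing_ev (i : 'I_n) H : pairing (ev i) H = H 0 i.
Proof.
rewrite /pairing (bigD1 i) //= evE eqxx mul1r big1 ?addr0 // => k hk.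
by rewrite evE eq_sym (negbTE hk) mul0r.
Qed.
End Pair.

Section Restr.
Variables (R : realType) (n : nat) (bs : seq nat) (hR : 'rV[R]_n -> Prop)
  (theta : 'rV[int]_n -> Prop).
Local Notation S := (size bs).
Local Notation sb := (sumn bs).
Hypothesis Th1 : forall i j : 'I_n, i != j -> same_U bs i j -> theta (ev i - ev j).
Hypothesis Tail : forall H, tsp hR theta H -> forall i : 'I_n, (sb <= i)%N -> H 0 i = 0.

Definition Kf (H : 'rV[R]_n) (c : nat) : R :=
  if [pick i : 'I_n | (i < sb)%N && (blk bs i == c)] is Some j then H 0 j else 0.

Lemma Hblk H : tsp hR theta H -> forall i : 'I_n, (i < sb)%N -> H 0 i = Kf H (blk bs i).
Proof.
move=> [_ hth] i hi; rewrite /Kf; case: pickP => [j /andP[hj /eqP hb] | /(_ i)]; last by rewrite hi eqxx.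
case: (eqVneq i j) => [->//|ne].
have hs : same_U bs i j by rewrite /same_U hi hj hb eqxx.
have := hth _ (Th1 ne hs); rewrite pairingB !pairing_ev => /eqP; by rewrite subr_eq0 => /eqP.
Qed.

Lemma pairing_wv H a : tsp hR theta H ->
  pairing a H = \sum_(c < S) (wv bs a 0 c)%:~R * Kf H c.
Proof.
move=> hH; rewrite /pairing.
transitivity (\sum_(i < n) \sum_(c < S)
   ((i < sb)%N && (blk bs i == c))%:R * ((a 0 i)%:~R * Kf H c)).
  apply: eq_bigr => i _; case: (ltnP i sb) => hi.
    have [hc _] := blk_inv hi.
    rewrite (bigD1 (Ordinal hc)) //= eqxx mul1r big1 ?addr0; first by rewrite -Hblk.
    move=> c hc'; have -> : (blk bs i == c) = false; last by rewrite mul0r.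
    by apply/negbTE; apply: contra hc' => /eqP e; apply/eqP/val_inj.
  by rewrite Tail // mulr0 big1 // => c _; rewrite mul0r.
rewrite exchange_big; apply: eq_bigr => c _.
rewrite mxE rmorph_sum mulr_suml [RHS]big_mkcond; apply: eq_bigr => i _.
by case: ifP => _; rewrite ?mul1r ?mul0r.
Qed.

Definition Tv (c : 'I_S) : 'rV[R]_n := \row_i ((i < sb)%N && (blk bs i == c))%:R.

Lemma pairing_Tv a c : pairing a (Tv c) = (wv bs a 0 c)%:~R.
Proof.
rewrite /pairing mxE rmorph_sum [RHS]big_mkcond; apply: eq_bigr => i _; rewrite mxE.
by case: ifP => _; rewrite ?mulr1 ?mulr0.
Qed.

Lemma restr_iff (Q : 'rV[int]_n -> Prop)
  (test : forall c : 'I_S, exists H : 'rV[R]_n, tsp hR theta H /\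
      forall a, Q a -> pairing a H = (wv bs a 0 c)%:~R) a b :
  Q a -> Q b -> (restr R n hR theta a = restr R n hR theta b <-> wv bs a = wv bs b).
Proof.
move=> qa qb; split.
  move=> e; apply/matrixP => x c; rewrite [x]ord1.
  have [H [hH hp]] := test c.
  have := congr1 (fun f : {H : 'rV[R]_n | tsp hR theta H} -> R => f (exist _ H hH)) e; rewrite /restr /= !hp //; exact: intr_inj.
move=> e; apply: functional_extensionality => -[H hH].
by rewrite /restr /= !pairing_wv // e.
Qed.
End Restr.

Lemma gen_count (n S : nat) (T : Type) (F : 'rV[int]_n -> T)
  (w : 'rV[int]_n -> 'rV[int]_S) (pos theta : 'rV[int]_n -> Prop)
  (U : finType) (P : pred U) (L : U -> 'rV[int]_S) (N : nat) :
  #|P| = N ->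
  (forall a b, pos a -> pos b -> (F a = F b <-> w a = w b)) ->
  (forall a, theta a -> w a = 0) ->
  (forall u, P u -> L u != 0) ->
  {in P &, injective L} ->
  (forall u, P u -> exists a, pos a /\ w a = L u) ->
  (forall a, pos a -> ~ theta a -> exists u, P u /\ w a = L u) ->
  has_card (fun f => exists a, pos a /\ ~ theta a /\ f = F a) N.
Proof.
move=> hN hF hth hL0 hinj hex hsurj.
have hall : forall u : U, exists a : 'rV[int]_n, P u -> pos a /\ w a = L u.
  move=> u; case: (boolP (P u)) => hu; last by exists 0.
  by have [a ha] := hex u hu; exists a.
have [ro hro] := @fin_all_exists U (fun _ => 'rV[int]_n) (fun u a => P u -> pos a /\ w a = L u) hall.
have hnt u : P u -> ~ theta (ro u).
  move=> hu /hth; rewrite (proj2 (hro u hu)) => /eqP; by rewrite (negbTE (hL0 u hu)).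
exists (fun i => F (ro (@enum_val U P (cast_ord (esym hN) i)))); split.
  move=> i j /= e.
  have hi := enum_valP (cast_ord (esym hN) i); have hj := enum_valP (cast_ord (esym hN) j).
  have [pi wi] := hro _ hi; have [pj wj] := hro _ hj.
  by have := (hF _ _ pi pj).1 e; rewrite wi wj => /(hinj _ _ hi hj) /enum_val_inj /cast_ord_inj.
move=> x; split.
  move=> [a [pa [nta ->]]].
  have [u [hu e]] := hsurj a pa nta.
  exists (cast_ord hN (enum_rank_in hu u)).
  rewrite cast_ordK enum_rankK_in //.
  by apply/hF; [case: (hro _ hu) | | rewrite e (proj2 (hro _ hu))].
move=> [i <-]; have hi := enum_valP (cast_ord (esym hN) i).
by exists (ro (enum_val (cast_ord (esym hN) i))); split; [case: (hro _ hi) | split => //; apply: hnt].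
Qed.

Ltac bcase := repeat match goal with |- context [(?x == ?y)] => case: (x =P y) => [?|?] end.

Section Core.
Variable S : nat.
Implicit Types a b c : 'I_S.
Definition Loff a b : 'rV[int]_S := if (a < b)%N then ev a - ev b else ev a + ev b.

Ltac brute E l :=
  let rec go l := match l with
    | nil => idtac
    | cons ?k ?l' => have := congr1 (fun x : 'rV[int]_S => x 0 k) E; go l'
    end in go l; rewrite ?mulr2n !mxE /=; bcase; subst => //=; try lia;
  try (exfalso; match goal with H : ?x <> ?y |- _ => apply: H; apply: val_inj; simpl; lia end).

Lemma C1 a b a' b' : a != b -> a' != b' -> Loff a b = Loff a' b' -> a = a' /\ b = b'.
Proof.
move=> /eqP h1 /eqP h2; rewrite /Loff.
case: ifP => l1; case: ifP => l2 E; brute E (cons a (cons b nil)).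
Qed.

Lemma C2 a b c : a != b -> Loff a b != ev c.
Proof.
move=> /eqP h1; rewrite /Loff; apply/eqP.
by case: ifP => l1 E; brute E (cons a (cons b nil)).
Qed.

Lemma C3 a b c : a != b -> Loff a b != ev c *+ 2.
Proof.
move=> /eqP h1; rewrite /Loff; apply/eqP.
by case: ifP => l1 E; brute E (cons a (cons b nil)).
Qed.

Lemma C4 c c' : ev c = ev c' :> 'rV[int]_S -> c = c'.
Proof. by move=> E; brute E (cons c nil). Qed.

Lemma C4' c c' : ev c *+ 2 = ev c' *+ 2 :> 'rV[int]_S -> c = c'.
Proof. by move=> E; brute E (cons c nil). Qed.

Lemma C5 c c' : ev c != ev c' *+ 2 :> 'rV[int]_S.
Proof. by apply/eqP => E; brute E (cons c nil). Qed.

Lemma C6 a b : a != b -> Loff a b != 0.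
Proof.
move=> /eqP h1; rewrite /Loff; apply/eqP.
by case: ifP => l1 E; brute E (cons a nil).
Qed.

Lemma C7 c : ev c != 0 :> 'rV[int]_S.
Proof. by apply/eqP => E; brute E (cons c nil). Qed.

Lemma C8 c : ev c *+ 2 != 0 :> 'rV[int]_S.
Proof. by apply/eqP => E; brute E (cons c nil). Qed.
End Core.

Lemma widen_inj m p (h : (m <= p)%N) (c c' : 'I_m) : widen_ord h c = widen_ord h c' -> c = c'.
Proof. by move/(congr1 val) => /= e; apply: val_inj. Qed.

Section Fams.
Variables (S k : nat) (hk : (k <= S)%N).

Definition L1 (u : ('I_S * 'I_S + 'I_k)%type) : 'rV[int]_S :=
  match u with
  | inl (a, b) => if a == b then ev a else Loff a b
  | inr c => ev (widen_ord hk c) *+ 2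
  end.

Definition L2 (u : ('I_S * 'I_S + 'I_k)%type) : 'rV[int]_S :=
  match u with
  | inl (a, b) => if a == b then ev a *+ 2 else Loff a b
  | inr c => ev (widen_ord hk c)
  end.

Definition L3 (u : ('I_S * 'I_S.-1 + 'I_k)%type) : 'rV[int]_S :=
  match u with
  | inl (a, j) => Loff a (lift a j)
  | inr c => ev (widen_ord hk c) *+ 2
  end.

Lemma L1_inj : injective L1.
Proof.
move=> [[a b]|c] [[a' b']|c'] /=.
- case: (eqVneq a b) => [<-|ab]; case: (eqVneq a' b') => [<-|ab'] E.
  + by rewrite (C4 E).
  + by move: (C2 a ab'); rewrite -E eqxx.
  + by move: (C2 a' ab); rewrite E eqxx.
  + by case: (C1 ab ab' E) => -> ->.
- case: (eqVneq a b) => [_|ab] E.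
  + by move: (C5 a (widen_ord hk c')); rewrite E eqxx.
  + by move: (C3 (widen_ord hk c') ab); rewrite E eqxx.
- case: (eqVneq a' b') => [_|ab] E.
  + by move: (C5 a' (widen_ord hk c)); rewrite E eqxx.
  + by move: (C3 (widen_ord hk c) ab); rewrite E eqxx.
- by move/C4'/widen_inj => ->.
Qed.

Lemma L1_nz u : L1 u != 0.
Proof.
case: u => [[a b]|c] /=; last exact: C8.
by case: (eqVneq a b) => [_|ab]; [apply: C7 | apply: C6].
Qed.

Lemma L2_inj : injective L2.
Proof.
move=> [[a b]|c] [[a' b']|c'] /=.
- case: (eqVneq a b) => [<-|ab]; case: (eqVneq a' b') => [<-|ab'] E.
  + by rewrite (C4' E).
  + by move: (C3 a ab'); rewrite -E eqxx.
  + by move: (C3 a' ab); rewrite E eqxx.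
  + by case: (C1 ab ab' E) => -> ->.
- case: (eqVneq a b) => [_|ab] E.
  + by move: (C5 (widen_ord hk c') a); rewrite E eqxx.
  + by move: (C2 (widen_ord hk c') ab); rewrite E eqxx.
- case: (eqVneq a' b') => [_|ab] E.
  + by move: (C5 (widen_ord hk c) a'); rewrite E eqxx.
  + by move: (C2 (widen_ord hk c) ab); rewrite E eqxx.
- by move/C4/widen_inj => ->.
Qed.

Lemma L2_nz u : L2 u != 0.
Proof.
case: u => [[a b]|c] /=; last exact: C7.
by case: (eqVneq a b) => [_|ab]; [apply: C8 | apply: C6].
Qed.

Lemma L3_inj : injective L3.
Proof.
move=> [[a j]|c] [[a' j']|c'] /=.
- by move/(C1 (neq_lift a j) (neq_lift a' j')) => [e1 e2]; subst a'; rewrite (lift_inj e2).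
- by move=> E; move: (C3 (widen_ord hk c') (neq_lift a j)); rewrite E eqxx.
- by move=> E; move: (C3 (widen_ord hk c) (neq_lift a' j')); rewrite -E eqxx.
- by move/C4'/widen_inj => ->.
Qed.

Lemma L3_nz u : L3 u != 0.
Proof. by case: u => [[a j]|c] /=; [apply: C6; apply: neq_lift | apply: C8]. Qed.
End Fams.

Section Coord.
Variables (n : nat) (bs : seq nat) (tt : nat).
Hypothesis hn : n = (sumn bs + tt)%N.
Hypothesis hpos : forall c, (c < size bs)%N -> (0 < nth 0 bs c)%N.
Local Notation S := (size bs).
Local Notation sb := (sumn bs).

Lemma ex_fc (c : 'I_S) : exists i : 'I_n, nat_of_ord i = Pb bs c /\ wv bs (ev i) = ev c.
Proof.
have [hb hl] := blk_start (ltn_ord c) (hpos (ltn_ord c)).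
have hi : (Pb bs c < n)%N by lia.
exists (Ordinal hi); split => //.
have [c' [e1 e2]] := (@wv_ev_in _ _ (Ordinal hi) hl).
by rewrite e2; congr ev; apply: val_inj; rewrite e1 /= hb.
Qed.

Lemma Pb_lt (a b : nat) : (a < b)%N -> (b <= S)%N -> (Pb bs a < Pb bs b)%N.
Proof.
move=> hab hb; have ha : (a < S)%N by lia.
have : (Pb bs a < Pb bs a.+1)%N by rewrite Pb_S //; have := hpos ha; lia.
by move/leq_trans; apply; apply: Pb_mono.
Qed.

Lemma ex_sc (c : 'I_S) : (1 < nth 0 bs c)%N ->
  exists i j : 'I_n, (i < j)%N /\ wv bs (ev i) = ev c /\ wv bs (ev j) = ev c.
Proof.
move=> h2; have [i [ei wi]] := ex_fc c.
have [hb hl] := blk_second (ltn_ord c) h2.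
have hj : ((Pb bs c).+1 < n)%N by lia.
exists i, (Ordinal hj); split; first by rewrite ei /=.
split => //.
have [c' [e1 e2]] := (@wv_ev_in _ _ (Ordinal hj) hl).
by rewrite e2; congr ev; apply: val_inj; rewrite e1 /= hb.
Qed.

Lemma ex_Loff (a b : 'I_S) : a != b -> exists r : 'rV[int]_n, long_pos r /\ wv bs r = Loff a b.
Proof.
move=> ab; have [i [ei wi]] := ex_fc a; have [j [ej wj]] := ex_fc b.
rewrite /Loff; case: ifP => hab.
  exists (ev i - ev j); split; last by rewrite wvB wi wj.
  by exists i, j; split; [rewrite ei ej; apply: Pb_lt => //; exact: ltnW | left].
exists (ev j + ev i); split; last by rewrite wvD wi wj addrC.
have hba : (b < a)%N by move: ab hab; rewrite -(inj_eq val_inj) /= => /eqP ab hab; lia.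
by exists j, i; split; [rewrite ei ej; apply: Pb_lt => //; exact: ltnW | right].
Qed.

Lemma ex_tail (c : 'I_S) : (0 < tt)%N -> exists r : 'rV[int]_n, long_pos r /\ wv bs r = ev c.
Proof.
move=> htt; have [i [ei wi]] := ex_fc c.
have ht : (sb < n)%N by lia.
exists (ev i - ev (Ordinal ht)); split.
  exists i, (Ordinal ht); split; last by left.
  rewrite ei /=; have [_ h] := blk_start (ltn_ord c) (hpos (ltn_ord c)); exact: h.
by rewrite wvB wi wv_ev_out // subr0.
Qed.

Lemma ex_two (c : 'I_S) : (1 < nth 0 bs c)%N -> exists r : 'rV[int]_n, long_pos r /\ wv bs r = ev c *+ 2.
Proof.
move=> h2; have [i [j [hij [wi wj]]]] := ex_sc h2.
exists (ev i + ev j); split; first by exists i, j; split => //; right.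
by rewrite wvD wi wj mulr2n.
Qed.

Variable isroot : 'rV[int]_n -> Prop.
Local Notation theta := (thetaBCD n isroot bs tt).

Lemma Th1_BCD (i j : 'I_n) : i != j -> same_U bs i j -> theta (ev i - ev j).
Proof. by move=> h1 h2; left; exists i, j. Qed.

Lemma same_blk (i j : 'I_n) : (i < sb)%N -> (j < sb)%N -> blk bs i = blk bs j ->
  wv bs (ev i) = wv bs (ev j).
Proof.
move=> hi hj e; have [c [e1 e2]] := (@wv_ev_in _ _ i hi); have [c' [e1' e2']] := (@wv_ev_in _ _ j hj).
by rewrite e2 e2'; congr ev; apply: val_inj; rewrite e1 e1' e.
Qed.

Lemma Th2_BCD a : theta a -> wv bs a = 0.
Proof.
case.
  move=> [i [j [_ [/and3P [hi hj /eqP e] ->]]]].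
  by rewrite wvB (same_blk hi hj e) subrr.
move=> [_ h]; apply: wv_tail => k /h; lia.
Qed.

Lemma support2 (i j : 'I_n) (a : 'rV[int]_n) :
  (a = ev i - ev j \/ a = ev i + ev j) -> (sb <= i)%N -> (sb <= j)%N ->
  forall k : 'I_n, a 0 k != 0 -> (n - tt <= k)%N.
Proof.
move=> ha hi hj k; have -> : (n - tt = sb)%N by lia.
case: ha => ->; rewrite !mxE /=; case: (eqVneq i k) => [<-//|_]; case: (eqVneq j k) => [<-//|_];
  by rewrite /= ?subrr ?mulr0n ?addr0 ?eqxx.
Qed.

Lemma support1 (i : 'I_n) (a : 'rV[int]_n) :
  (a = ev i \/ a = ev i *+ 2) -> (sb <= i)%N ->
  forall k : 'I_n, a 0 k != 0 -> (n - tt <= k)%N.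
Proof.
move=> ha hi k; have -> : (n - tt = sb)%N by lia.
case: ha => ->; rewrite ?mulr2n !mxE /=; case: (eqVneq i k) => [<-//|_];
  by rewrite /= ?mulr0n ?addr0 ?eqxx.
Qed.

Hypothesis long_isroot : forall a, long_root a -> isroot a.
Variable s : nat.
Hypothesis hsize : forall c, (c < S)%N -> (1 < nth 0 bs c)%N -> (c < s)%N.

Lemma long_classify a : long_pos a -> ~ theta a ->
  (exists x y : 'I_S, x != y /\ wv bs a = Loff x y) \/
  (exists c : 'I_S, wv bs a = ev c /\ (0 < tt)%N) \/
  (exists c : 'I_S, (c < s)%N /\ wv bs a = ev c *+ 2).
Proof.
move=> [i [j [hij ha]]] nt.
case: (ltnP j sb) => hj.
  have hi : (i < sb)%N by lia.
  have [ci [ei wi]] := (@wv_ev_in _ _ i hi); have [cj [ej wj]] := (@wv_ev_in _ _ j hj).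
  have hle : (ci <= cj)%N by rewrite ei ej; apply: blk_mono; lia.
  case: (eqVneq ci cj) => [ecc|ne].
    case: ha => ha.
      exfalso; apply: nt; rewrite ha; left; exists i, j; split.
        by apply/eqP => e; move: hij; rewrite e ltnn.
      by split => //; rewrite /same_U hi hj -ei -ej ecc eqxx.
    right; right; exists ci; split.
      apply: hsize => //; rewrite ei; apply: (blk_two hij hj); rewrite -ei -ej ecc //.
    by rewrite ha wvD wi wj ecc mulr2n.
  have lt : (ci < cj)%N by move: ne; rewrite -(inj_eq val_inj) /= => /eqP ne; lia.
  left; case: ha => ->.
    exists ci, cj; split => //; by rewrite wvB wi wj /Loff lt.
  exists cj, ci; split; first by rewrite eq_sym.
  by rewrite wvD wi wj /Loff ltnNge (ltnW lt) /= addrC.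
case: (ltnP i sb) => hi.
  have [ci [ei wi]] := (@wv_ev_in _ _ i hi).
  right; left; exists ci; split; last by have := ltn_ord j; lia.
  by case: ha => ->; rewrite ?wvB ?wvD wi wv_ev_out // ?subr0 ?addr0.
exfalso; apply: nt; right; split; last exact: support2 ha hi hj.
apply: long_isroot; exists i, j; split; first by apply/eqP => e; move: hij; rewrite e ltnn.
by case: ha => ->; [left | right; left].
Qed.
End Coord.

Lemma bs_facts (ns : seq nat) m : all (fun k => 1 < k)%N ns ->
  let bs := ns ++ nseq m 1%N in
  [/\ sumn bs = (sumn ns + m)%N, size bs = (size ns + m)%N,
   forall c, (c < size bs)%N -> (0 < nth 0 bs c)%N,
   forall c, (c < size bs)%N -> (1 < nth 0 bs c)%N -> (c < size ns)%N &
   forall c, (c < size ns)%N -> (1 < nth 0 bs c)%N].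
Proof.
move=> hns bs; rewrite /bs sumn_cat sumn_nseq size_cat size_nseq mul1n; split => // c hc.
- rewrite nth_cat; case: ifP => h; first by have /= := (allP hns) _ (mem_nth 0%N h); lia.
  by rewrite nth_nseq; case: ifP => //; lia.
- rewrite nth_cat; case: ifP => h //; rewrite nth_nseq; case: ifP => //.
- by rewrite nth_cat hc; have /= := (allP hns) _ (mem_nth 0%N hc).
Qed.

Lemma hF_BCD (R : realType) n bs tt isroot (hn : n = (sumn bs + tt)%N)
  (Tail : forall H, tsp (@hR_full R n) (thetaBCD n isroot bs tt) H ->
     forall i : 'I_n, (sumn bs <= i)%N -> H 0 i = 0) a b :
  restr R n (@hR_full R n) (thetaBCD n isroot bs tt) a =
  restr R n (@hR_full R n) (thetaBCD n isroot bs tt) b <-> wv bs a = wv bs b.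
Proof.
have T : forall c : 'I_(size bs), exists H : 'rV[R]_n,
   tsp (@hR_full R n) (thetaBCD n isroot bs tt) H /\
   (forall a : 'rV[int]_n, True -> pairing a H = (wv bs a 0 c)%:~R).
  move=> c; exists (@Tv R n bs c); split; last by move=> a' _; rewrite pairing_Tv.
  by split => // a' ha'; rewrite pairing_Tv (Th2_BCD hn ha') mxE.
exact: (restr_iff (fun i j h1 h2 => @Th1_BCD n bs tt isroot i j h1 h2) Tail T I I).
Qed.

Lemma arithD (s m : nat) : ((s + m) * (s + m).-1 + s = (s + m) ^ 2 - m)%N.
Proof.
rewrite -mulnn; case e: (s + m)%N => [|k] /=; first by lia.
have -> : (k.+1 * k.+1 = k.+1 * k + k.+1)%N by rewrite mulnS addnC.
lia.
Qed.

Lemma card_predT_sum (U : finType) : #|@predT U| = #|{: U}|.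
Proof. by apply: eq_card. Qed.

Lemma caseB (R : realType) n m tt ns : all (fun k => 1 < k)%N ns -> n = (sumn ns + m + tt)%N ->
  num_summands R n (@hR_full R n) (@posrootsB n)
    (thetaBCD n (@rootsB n) (ns ++ nseq m 1%N) tt) ((size ns + m) ^ 2 + size ns)%N.
Proof.
move=> hns hn0.
have [hsb hS hpos hsize hge] := bs_facts m hns.
move: hsb hS hpos hsize hge; set bs := ns ++ nseq m 1%N => hsb hS hpos hsize hge.
have hn : n = (sumn bs + tt)%N by rewrite hsb.
have hk : (size ns <= size bs)%N by rewrite hS leq_addr.
have Tail : forall H, tsp (@hR_full R n) (thetaBCD n (@rootsB n) bs tt) H ->
    forall i : 'I_n, (sumn bs <= i)%N -> H 0 i = 0.
  move=> H [_ hth] i hi.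
  rewrite -(pairing_ev i H); apply: hth.
  right; split; first by right; exists i; left.
  exact: (support1 hn (or_introl erefl) hi).
apply: (@gen_count n (size bs) _ (restr R n (@hR_full R n) (thetaBCD n (@rootsB n) bs tt))
   (@wv n bs) _ _ _ (@predT _) (L1 hk)).
- by rewrite card_predT_sum card_sum card_prod !card_ord hS mulnn.
- by move=> a b _ _; exact: hF_BCD.
- by move=> a ha; exact: (Th2_BCD hn ha).
- by move=> u _; exact: L1_nz.
- by move=> u v _ _; exact: L1_inj.
- move=> [[a b]|c] _ /=.
    case: (eqVneq a b) => [_|ab].
      have [i [_ wi]] := ex_fc hn hpos a.
      by exists (ev i); split => //; right; exists i.
    have [r [hr wr]] := ex_Loff hn hpos ab.
    by exists r; split => //; left.
  have [r [hr wr]] := ex_two hn hpos (c := widen_ord hk c) (hge _ (ltn_ord c)).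
  by exists r; split => //; left.
- move=> a [ha|[i ->]] nt.
    case: (long_classify hn (fun a h => or_introl h) hsize ha nt) =>
       [[x [y [xy e]]]|[[c [e _]]|[c [hc e]]]].
    + by exists (inl (x, y)); split => //=; rewrite (negbTE xy).
    + by exists (inl (c, c)); split => //=; rewrite eqxx.
    + exists (inr (Ordinal hc)); split => //=; rewrite e; congr (ev _ *+ 2); exact: val_inj.
  case: (ltnP i (sumn bs)) => hi.
    have [ci [_ wi]] := wv_ev_in hi.
    by exists (inl (ci, ci)); rewrite /= eqxx wi.
  exfalso; apply: nt; right; split; first by right; exists i; left.
  exact: (support1 hn (or_introl erefl) hi).
Qed.

Lemma caseC (R : realType) n m tt ns k (hk0 : (k <= size ns + m)%N) :
  all (fun k => 1 < k)%N ns -> n = (sumn ns + m + tt)%N ->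
  ((0 < k)%N -> (0 < tt)%N) -> ((0 < tt)%N -> k = (size ns + m)%N) ->
  num_summands R n (@hR_full R n) (@posrootsC n)
    (thetaBCD n (@rootsC n) (ns ++ nseq m 1%N) tt) ((size ns + m) ^ 2 + k)%N.
Proof.
move=> hns hn0 hkt htk.
have [hsb hS hpos hsize hge] := bs_facts m hns.
move: hsb hS hpos hsize hge; set bs := ns ++ nseq m 1%N => hsb hS hpos hsize hge.
have hn : n = (sumn bs + tt)%N by rewrite hsb.
have hk : (k <= size bs)%N by rewrite hS.
have Tail : forall H, tsp (@hR_full R n) (thetaBCD n (@rootsC n) bs tt) H ->
    forall i : 'I_n, (sumn bs <= i)%N -> H 0 i = 0.
  move=> H [_ hth] i hi.
  have : pairing (ev i *+ 2) H = 0.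
    apply: hth; right; split; first by right; exists i; left.
    exact: (support1 hn (or_intror erefl) hi).
  rewrite pairingM2 pairing_ev mulr2n; lra.
apply: (@gen_count n (size bs) _ (restr R n (@hR_full R n) (thetaBCD n (@rootsC n) bs tt))
   (@wv n bs) _ _ _ (@predT _) (L2 hk)).
- by rewrite card_predT_sum card_sum card_prod !card_ord hS mulnn.
- by move=> a b _ _; exact: hF_BCD.
- by move=> a ha; exact: (Th2_BCD hn ha).
- by move=> u _; exact: L2_nz.
- by move=> u v _ _; exact: L2_inj.
- move=> [[a b]|c] _ /=.
    case: (eqVneq a b) => [_|ab].
      have [i [_ wi]] := ex_fc hn hpos a.
      by exists (ev i *+ 2); split; [right; exists i | rewrite wvM2 wi].
    have [r [hr wr]] := ex_Loff hn hpos ab.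
    by exists r; split => //; left.
  have htt : (0 < tt)%N by apply: hkt; case: c => /= c hc; lia.
  have [r [hr wr]] := ex_tail hn hpos (widen_ord hk c) htt.
  by exists r; split => //; left.
- move=> a [ha|[i ->]] nt.
    have hs' : forall c, (c < size bs)%N -> (1 < nth 0 bs c)%N -> (c < size bs)%N by [].
    case: (long_classify hn (fun a h => or_introl h) hs' ha nt) =>
       [[x [y [xy e]]]|[[c [e htt]]|[c [hc e]]]].
    + by exists (inl (x, y)); split => //=; rewrite (negbTE xy).
    + have hck : (c < k)%N by rewrite (htk htt) -hS.
      exists (inr (Ordinal hck)); split => //=; rewrite e; congr ev; exact: val_inj.
    + by exists (inl (c, c)); split => //=; rewrite eqxx.
  case: (ltnP i (sumn bs)) => hi.
    have [ci [_ wi]] := wv_ev_in hi.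
    by exists (inl (ci, ci)); rewrite /= eqxx wvM2 wi.
  exfalso; apply: nt; right; split; first by right; exists i; left.
  exact: (support1 hn (or_intror erefl) hi).
Qed.

Lemma caseDii (R : realType) n m tt ns : all (fun k => 1 < k)%N ns -> n = (sumn ns + m + tt)%N ->
  (2 <= tt)%N ->
  num_summands R n (@hR_full R n) (@posrootsD n)
    (thetaBCD n (@rootsD n) (ns ++ nseq m 1%N) tt) ((size ns + m) ^ 2 + size ns)%N.
Proof.
move=> hns hn0 htt.
have [hsb hS hpos hsize hge] := bs_facts m hns.
move: hsb hS hpos hsize hge; set bs := ns ++ nseq m 1%N => hsb hS hpos hsize hge.
have hn : n = (sumn bs + tt)%N by rewrite hsb.
have hk : (size ns <= size bs)%N by rewrite hS leq_addr.
have Tail : forall H, tsp (@hR_full R n) (thetaBCD n (@rootsD n) bs tt) H ->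
    forall i : 'I_n, (sumn bs <= i)%N -> H 0 i = 0.
  move=> H [_ hth] i hi.
  have [j [ji hj]] : exists j : 'I_n, j != i /\ (sumn bs <= j)%N.
    case: (eqVneq (nat_of_ord i) (sumn bs)) => e.
      have hl : ((sumn bs).+1 < n)%N by lia.
      exists (Ordinal hl); split => //; apply/eqP => /(congr1 val) /=; lia.
    have hl : (sumn bs < n)%N by lia.
    exists (Ordinal hl); split => //; apply/eqP => /(congr1 val) /= e'; by move: e; rewrite -e' eqxx.
  have ij : i != j by rewrite eq_sym.
  have h1 : pairing (ev i - ev j) H = 0.
    apply: hth; right; split; first by exists i, j; split => //; left.
    exact: (support2 hn (or_introl erefl) hi hj).
  have h2 : pairing (ev i + ev j) H = 0.
    apply: hth; right; split; first by exists i, j; split => //; right; left.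
    exact: (support2 hn (or_intror erefl) hi hj).
  move: h1 h2; rewrite pairingB pairingD !pairing_ev; lra.
apply: (@gen_count n (size bs) _ (restr R n (@hR_full R n) (thetaBCD n (@rootsD n) bs tt))
   (@wv n bs) _ _ _ (@predT _) (L1 hk)).
- by rewrite card_predT_sum card_sum card_prod !card_ord hS mulnn.
- by move=> a b _ _; exact: hF_BCD.
- by move=> a ha; exact: (Th2_BCD hn ha).
- by move=> u _; exact: L1_nz.
- by move=> u v _ _; exact: L1_inj.
- move=> [[a b]|c] _ /=.
    case: (eqVneq a b) => [_|ab].
      have [r [hr wr]] := ex_tail hn hpos a (ltn_trans (isT : (0 < 1)%N) htt).
      by exists r.
    have [r [hr wr]] := ex_Loff hn hpos ab.
    by exists r.
  have [r [hr wr]] := ex_two hn hpos (c := widen_ord hk c) (hge _ (ltn_ord c)).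
  by exists r.
- move=> a ha nt.
  case: (long_classify hn (fun a h => h) hsize ha nt) =>
       [[x [y [xy e]]]|[[c [e _]]|[c [hc e]]]].
  + by exists (inl (x, y)); split => //=; rewrite (negbTE xy).
  + by exists (inl (c, c)); split => //=; rewrite eqxx.
  + exists (inr (Ordinal hc)); split => //=; rewrite e; congr (ev _ *+ 2); exact: val_inj.
Qed.

Lemma caseDi (R : realType) n m ns : all (fun k => 1 < k)%N ns -> n = (sumn ns + m)%N ->
  num_summands R n (@hR_full R n) (@posrootsD n)
    (thetaBCD n (@rootsD n) (ns ++ nseq m 1%N) 0) ((size ns + m) ^ 2 - m)%N.
Proof.
move=> hns hn0.
have [hsb hS hpos hsize hge] := bs_facts m hns.
move: hsb hS hpos hsize hge; set bs := ns ++ nseq m 1%N => hsb hS hpos hsize hge.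
have hn : n = (sumn bs + 0)%N by rewrite hsb addn0.
have hk : (size ns <= size bs)%N by rewrite hS leq_addr.
have Tail : forall H, tsp (@hR_full R n) (thetaBCD n (@rootsD n) bs 0) H ->
    forall i : 'I_n, (sumn bs <= i)%N -> H 0 i = 0.
  by move=> H _ i hi; have := ltn_ord i; lia.
apply: (@gen_count n (size bs) _ (restr R n (@hR_full R n) (thetaBCD n (@rootsD n) bs 0))
   (@wv n bs) _ _ _ (@predT _) (L3 hk)).
- by rewrite card_predT_sum card_sum card_prod !card_ord hS arithD.
- by move=> a b _ _; exact: hF_BCD.
- by move=> a ha; exact: (Th2_BCD hn ha).
- by move=> u _; exact: L3_nz.
- by move=> u v _ _; exact: L3_inj.
- move=> [[a j]|c] _ /=.
    have [r [hr wr]] := ex_Loff hn hpos (neq_lift a j).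
    by exists r.
  have [r [hr wr]] := ex_two hn hpos (c := widen_ord hk c) (hge _ (ltn_ord c)).
  by exists r.
- move=> a ha nt.
  case: (long_classify hn (fun a h => h) hsize ha nt) =>
       [[x [y [xy e]]]|[[c [e htt]]|[c [hc e]]]].
  + case: (unliftP x y) => [j ey|ey]; last by move: xy; rewrite ey eqxx.
    by exists (inl (x, j)); split => //=; rewrite e ey.
  + by [].
  + exists (inr (Ordinal hc)); split => //=; rewrite e; congr (ev _ *+ 2); exact: val_inj.
Qed.

Lemma card_lt_pairs S : #|[pred p : 'I_S * 'I_S | (p.1 < p.2)%N]| = ((S * (S - 1)) %/ 2)%N.
Proof.
rewrite -sum1_card.
rewrite -(pair_big_dep (fun _ : 'I_S => true) (fun a b : 'I_S => (a < b)%N) (fun _ _ => 1%N)) /=.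
under eq_bigr => a _ do rewrite big_mkcond /=.
rewrite exchange_big /=.
transitivity (\sum_(b < S) (b : nat))%N.
  apply: eq_bigr => b _.
  rewrite -(big_mkord xpredT (fun a => if (a < b)%N then 1%N else 0%N)).
  rewrite (big_cat_nat _ (n := b)) //=; last exact: ltnW.
  rewrite big_nat_cond (eq_bigr (fun _ => 1%N)); last by move=> i /andP[/andP[_ ->]].
  rewrite -big_nat_cond sum_nat_const_nat subn0 muln1 big_nat_cond big1 ?addn0 //.
  by move=> i /andP[/andP[h _] _]; rewrite ltnNge h.
rewrite -(big_mkord xpredT (fun b => b)) bin2_sum bin2 -divn2 subn1.
by [].
Qed.

Lemma caseA (R : realType) n ns : all (fun k => 0 < k)%N ns -> sumn ns = n ->
  num_summands R n (@hR_A R n) (@posrootsA n) (thetaA n ns)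
    ((size ns * (size ns - 1)) %/ 2)%N.
Proof.
move=> hns hn0.
have hn : n = (sumn ns + 0)%N by rewrite addn0.
have hpos : forall c, (c < size ns)%N -> (0 < nth 0 ns c)%N.
  by move=> c hc; have /= := (allP hns) _ (mem_nth 0%N hc).
have Th1 : forall i j : 'I_n, i != j -> same_U ns i j -> thetaA n ns (ev i - ev j).
  by move=> i j h1 h2; exists i, j.
have Tail : forall H, tsp (@hR_A R n) (thetaA n ns) H ->
    forall i : 'I_n, (sumn ns <= i)%N -> H 0 i = 0.
  by move=> H _ i hi; have := ltn_ord i; lia.
have Th2 : forall a, thetaA n ns a -> wv ns a = 0.
  move=> a [i [j [_ [/and3P [hi hj /eqP e] ->]]]].
  by rewrite wvB (same_blk hi hj e) subrr.
pose Q := fun a : 'rV[int]_n => exists i j : 'I_n, a = ev i - ev j.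
have T : forall c : 'I_(size ns), exists H : 'rV[R]_n,
   tsp (@hR_A R n) (thetaA n ns) H /\
   (forall a : 'rV[int]_n, Q a -> pairing a H = (wv ns a 0 c)%:~R).
  move=> c.
  have n0 : (0 < n)%N by have [_ h] := blk_start (ltn_ord c) (hpos _ (ltn_ord c)); lia.
  pose lam : R := (\sum_k (@Tv R n ns c) 0 k) / n%:R.
  exists (\row_k ((@Tv R n ns c) 0 k - lam)).
  have key : forall i j : 'I_n, pairing (ev i - ev j) (\row_k ((@Tv R n ns c) 0 k - lam))
       = pairing (ev i - ev j) (@Tv R n ns c).
    by move=> i j; rewrite !pairingB !pairing_ev !mxE opprB addrA subrK.
  split; last by move=> a [i [j ->]]; rewrite key pairing_Tv.
  split.
    rewrite /hR_A (eq_bigr (fun k => (@Tv R n ns c) 0 k - lam)); last by move=> k _; rewrite mxE.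
    rewrite sumrB sumr_const card_ord -mulr_natr /lam divfK ?subrr //.
    by rewrite pnatr_eq0 -lt0n.
  move=> a ha; have := Th2 a ha; case: ha => [i [j [_ [_ ->]]]] e.
  by rewrite key pairing_Tv e mxE.
apply: (@gen_count n (size ns) _ (restr R n (@hR_A R n) (thetaA n ns))
   (@wv n ns) _ _ _ [pred p : 'I_(size ns) * 'I_(size ns) | (p.1 < p.2)%N]
   (fun p => Loff p.1 p.2)).
- exact: card_lt_pairs.
- move=> a b [i [j [_ ha]]] [i' [j' [_ hb]]].
  by apply: (restr_iff Th1 Tail T); [exists i, j | exists i', j'].
- exact: Th2.
- move=> [a b] /= hab; apply: C6; exact: (negbT (ltn_eqF hab)).
- move=> [a b] [a' b'] /= hab hab' E.
  by case: (C1 (negbT (ltn_eqF hab)) (negbT (ltn_eqF hab')) E) => /= -> ->.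
- move=> [a b] /= hab.
  have [i [ei wi]] := ex_fc hn hpos a; have [j [ej wj]] := ex_fc hn hpos b.
  exists (ev i - ev j); split; last by rewrite wvB wi wj /Loff hab.
  exists i, j; split => //; rewrite ei ej; apply: (Pb_lt hn hpos) => //; exact: ltnW.
- move=> a [i [j [hij ha]]] nt.
  have hj : (j < sumn ns)%N by rewrite hn0.
  have hi : (i < sumn ns)%N by lia.
  have [ci [ei wi]] := wv_ev_in hi; have [cj [ej wj]] := wv_ev_in hj.
  have hle : (ci <= cj)%N by rewrite ei ej; apply: blk_mono; lia.
  case: (eqVneq ci cj) => [ecc|ne].
    exfalso; apply: nt; rewrite ha; exists i, j; split.
      by apply/eqP => e; move: hij; rewrite e ltnn.
    by split => //; rewrite /same_U hi hj -ei -ej ecc eqxx.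
  have lt : (ci < cj)%N by move: ne; rewrite -(inj_eq val_inj) /= => /eqP ne; lia.
  by exists (ci, cj); rewrite /= lt ha wvB wi wj /Loff lt.
Qed.

Local Close Scope ring_scope.

Theorem theorem3p1 (R : realType) :
  (* (A) SU(n)/S(U(n_1) x ... x U(n_s)) *)
  (forall (n : nat) (ns : seq nat),
     all (fun k => 0 < k)%N ns -> sumn ns = n ->
     num_summands R n (@hR_A R n) (@posrootsA n) (thetaA n ns)
       ((size ns * (size ns - 1)) %/ 2)%N) /\
  (* (B i) *)
  (forall (n m : nat) (ns : seq nat),
     (2 <= n)%N -> all (fun k => 1 < k)%N ns -> (sumn ns + m)%N = n ->
     num_summands R n (@hR_full R n) (@posrootsB n)
       (thetaBCD n (@rootsB n) (ns ++ nseq m 1%N) 0)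
       ((size ns + m) ^ 2 + size ns)%N) /\
  (* (B ii) *)
  (forall (n m t : nat) (ns : seq nat),
     (2 <= t)%N -> all (fun k => 1 < k)%N ns -> (sumn ns + t + m)%N = n ->
     num_summands R n (@hR_full R n) (@posrootsB n)
       (thetaBCD n (@rootsB n) (ns ++ nseq m 1%N) t)
       ((size ns + m) ^ 2 + size ns)%N) /\
  (* (C i) *)
  (forall (n m : nat) (ns : seq nat),
     (3 <= n)%N -> all (fun k => 1 < k)%N ns -> (sumn ns + m)%N = n ->
     num_summands R n (@hR_full R n) (@posrootsC n)
       (thetaBCD n (@rootsC n) (ns ++ nseq m 1%N) 0)
       ((size ns + m) ^ 2)%N) /\
  (* (C ii) *)
  (forall (n m t : nat) (ns : seq nat),
     (3 <= t)%N -> all (fun k => 1 < k)%N ns -> (sumn ns + t + m)%N = n ->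
     num_summands R n (@hR_full R n) (@posrootsC n)
       (thetaBCD n (@rootsC n) (ns ++ nseq m 1%N) t)
       ((size ns + m) ^ 2 + (size ns + m))%N) /\
  (* (D i) *)
  (forall (n m : nat) (ns : seq nat),
     (4 <= n)%N -> all (fun k => 1 < k)%N ns -> (sumn ns + m)%N = n ->
     num_summands R n (@hR_full R n) (@posrootsD n)
       (thetaBCD n (@rootsD n) (ns ++ nseq m 1%N) 0)
       ((size ns + m) ^ 2 - m)%N) /\
  (* (D ii) *)
  (forall (n m t : nat) (ns : seq nat),
     (4 <= t)%N -> all (fun k => 1 < k)%N ns -> (sumn ns + t + m)%N = n ->
     num_summands R n (@hR_full R n) (@posrootsD n)
       (thetaBCD n (@rootsD n) (ns ++ nseq m 1%N) t)
       ((size ns + m) ^ 2 + size ns)%N).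
Proof.
split; first by move=> n ns h1 h2; exact: caseA.
split; first by move=> n m ns _ hns hn; apply: caseB hns _; lia.
split; first by move=> n m t ns _ hns hn; apply: caseB hns _; lia.
split.
  move=> n m ns _ hns hn.
  have := @caseC R n m 0 ns 0 (leq0n _) hns ltac:(lia) (fun h => h) (fun h => ltac:(lia)).
  by rewrite addn0.
split.
  move=> n m t ns ht hns hn.
  apply: (@caseC R n m t ns (size ns + m) (leqnn _) hns) => //; lia.
split; first by move=> n m ns _ hns hn; apply: caseDi hns _; lia.
by move=> n m t ns ht hns hn; apply: caseDii hns _ _; lia.
Qed.
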